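(* Let $R$ be a left noetherian domain and let $A=\sigma(R)\langle x_1,\dots,x_n\rangle$ be a quasi-commutative bijective skew PBW extension of $R$. (i) If $f=c\,x^{\alpha}h\in A$, where $c\in R^*$ is a unit of $R$ that is normal in $R$ (i.e. $cR=Rc$), $x^\alpha\in\mathrm{Mon}(A)$, and $h\in Z(A)$ (the center of $A$), then $f$ is normal in $A$. (ii) If $f=c_1x^{\alpha_1}+\cdots+c_tx^{\alpha_t}\in A$ with $c_i\in R\setminus\{0\}$ and pairwise distinct standard monomials $x^{\alpha_1},\dots,x^{\alpha_t}$, and $f$ is normal in $A$, then each $c_i$ is normal in $R$, i.e. $c_iR=Rc_i$ for every $1\le i\le t$.
   Context: Skew PBW extension: a ring $A$ is a skew PBW extension of a ring $R$, written $A=\sigma(R)\langle x_1,\dots,x_n\rangle$, if (1) $R\subseteq A$ is a subring; (2) there are $x_1,\dots,x_n\in A$ such that $A$ is a free left $R$-module with basis $\mathrm{Mon}(A)=\{x^\alpha=x_1^{\alpha_1}\cdots x_n^{\alpha_n}:\alpha\in\mathbb N^n\}$ (the standard monomials); (3) for every $i$ and every $r\in R\setminus\{0\}$ there is $c_{i,r}\in R\setminus\{0\}$ with $x_ir-c_{i,r}x_i\in R$; (4) for every $i,j$ there is $c_{i,j}\in R\setminus\{0\}$ with $x_jx_i-c_{i,j}x_ix_j\in R+Rx_1+\cdots+Rx_n$. For each $i$ there are then an injective ring endomorphism $\sigma_i$ of $R$ and a $\sigma_i$-derivation $\delta_i$ of $R$ with $x_ir=\sigma_i(r)x_i+\delta_i(r)$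 for all $r\in R$. $A$ is bijective if every $\sigma_i$ is bijective and every $c_{i,j}$ is invertible. $A$ is quasi-commutative if conditions (3),(4) are replaced by: for every $i$ and $r\in R\setminus\{0\}$ there is $c_{i,r}\in R\setminus\{0\}$ with $x_ir=c_{i,r}x_i$, and for every $i,j$ there is $c_{i,j}\in R\setminus\{0\}$ with $x_jx_i=c_{i,j}x_ix_j$ (so all $\delta_i=0$). Under these hypotheses $A$ is a domain. An element $f$ of a ring $B$ is normal if $Bf=fB$. *)

(* Defs.v *)
From HB Require Import structures.
From mathcomp Require Import all_boot all_order all_algebra.
Set Implicit Arguments. Unset Strict Implicit. Unset Printing Implicit Defensive.
Import GRing.Theory.
Local Open Scope ring_scope.

Definition is_unit (R : nzRingType) (c : R) : Prop :=
  exists d : R, c * d = 1 /\ d * c = 1.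

(* f is normal in B : B f = f B (equality of the sets {b f} and {f b}). *)
Definition normal_elt (B : nzRingType) (f : B) : Prop :=
  (forall b : B, exists b' : B, b * f = f * b') /\
  (forall b : B, exists b' : B, f * b = b' * f).

Definition central (B : nzRingType) (h : B) : Prop :=
  forall a : B, h * a = a * h.

(* (Noncommutative) domain: no zero divisors (nontriviality is built into nzRingType). *)
Definition domain (R : nzRingType) : Prop :=
  forall a b : R, a * b = 0 -> a = 0 \/ b = 0.

Definition left_ideal (R : nzRingType) (I : R -> Prop) : Prop :=
  [/\ I 0, (forall a b, I a -> I b -> I (a + b)) & (forall r a, I a -> I (r * a))].

Definition left_noetherian (R : nzRingType) : Prop :=
  forall I : nat -> R -> Prop,
    (forall k, left_ideal (I k)) ->
    (forall k a, I k a -> I k.+1 a) ->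
    exists N : nat, forall m, (N <= m)%N -> forall a, I m a -> I N a.

Definition exps (n : nat) := {ffun 'I_n -> nat}.

Definition mon (A : nzRingType) (n : nat) (x : 'I_n -> A) (alpha : exps n) : A :=
  \prod_(i < n) x i ^+ alpha i.

(* A is a free left R-module (R embedded via iota) with basis Mon(A). *)
Definition mon_basis (R A : nzRingType) (iota : {rmorphism R -> A})
    (n : nat) (x : 'I_n -> A) : Prop :=
  (forall a : A, exists (s : seq (exps n)) (c : exps n -> R),
      a = \sum_(al <- s) iota (c al) * mon x al) /\
  (forall (s : seq (exps n)) (c : exps n -> R), uniq s ->
      \sum_(al <- s) iota (c al) * mon x al = 0 ->
      forall al, al \in s -> c al = 0).

(* A = sigma(R)<x_1,...,x_n> is a quasi-commutative bijective skew PBW extension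
   of R, where R is identified with the subring iota(R) of A. *)
Definition qc_bijective_skewPBW (R A : nzRingType) (iota : {rmorphism R -> A})
    (n : nat) (x : 'I_n -> A) : Prop :=
  [/\ injective iota,
      mon_basis iota x,
      (forall i (r : R), r != 0 -> exists c : R, c != 0 /\ x i * iota r = iota c * x i),
      (forall i j, exists c : R, c != 0 /\ is_unit c /\ x j * x i = iota c * x i * x j)
    &
      (forall i, exists sigma : R -> R, bijective sigma /\
          forall r : R, x i * iota r = iota (sigma r) * x i)].

(* Main.v *)
Require Import Defs.
From mathcomp Require Import all_boot all_order all_algebra.
From mathcomp Require Import zify.
Set Implicit Arguments. Unset Strict Implicit. Unset Printing Implicit Defensive.
Import GRing.Theory.
Local Open Scope ring_scope.


Lemma sum_pred1_uniq (V : nmodType) (I : eqType) (r : seq I) (j : I) (F : I -> V) :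
  uniq r -> j \in r -> \sum_(i <- r | i == j) F i = F j.
Proof.
move=> ur jr; rewrite -big_filter.
have -> : [seq i <- r | i == j] = [seq i <- r | pred1 j i] by [].
by rewrite filter_pred1_uniq // big_seq1.
Qed.

Definition addx n (a b : exps n) : exps n := [ffun i => (a i + b i)%N].
Definition zerox n : exps n := [ffun => 0%N].

Lemma partition_sum (R A : nzRingType) (iota : {rmorphism R -> A}) n (x : 'I_n -> A)
  (I : eqType) (r : seq I) (a : I -> R) (m : I -> exps n) (L : seq (exps n)) :
  uniq L -> (forall i, i \in r -> m i \in L) ->
  \sum_(i <- r) iota (a i) * mon x (m i) =
  \sum_(g <- L) iota (\sum_(i <- r | m i == g) a i) * mon x g.
Proof.
move=> uL rL.
rewrite [RHS](eq_bigr (fun g => \sum_(i <- r) (if m i == g then iota (a i) * mon x (m i) else 0))); last first.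
  move=> g _; rewrite rmorph_sum mulr_suml big_mkcond; apply: eq_bigr => i _.
  by case: eqP => [->|]; rewrite ?mul0r.
rewrite exchange_big; apply: eq_big_seq => i ri.
rewrite -big_mkcond /= (eq_bigl (fun g => g == m i)); last by move=> g; rewrite eq_sym.
by rewrite sum_pred1_uniq // rL.
Qed.

Lemma compare_coef (R A : nzRingType) (iota : {rmorphism R -> A}) n (x : 'I_n -> A)
  (Hfree : forall (s : seq (exps n)) (c : exps n -> R), uniq s ->
      \sum_(al <- s) iota (c al) * mon x al = 0 ->
      forall al, al \in s -> c al = 0)
  (I1 I2 : eqType) (r1 : seq I1) (r2 : seq I2) (a1 : I1 -> R) (a2 : I2 -> R)
  (m1 : I1 -> exps n) (m2 : I2 -> exps n) :
  \sum_(i <- r1) iota (a1 i) * mon x (m1 i) = \sum_(j <- r2) iota (a2 j) * mon x (m2 j) ->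
  forall g, \sum_(i <- r1 | m1 i == g) a1 i = \sum_(j <- r2 | m2 j == g) a2 j.
Proof.
move=> E g.
set L := undup ([seq m1 i | i <- r1] ++ [seq m2 j | j <- r2]).
have uL : uniq L by apply: undup_uniq.
have L1 : forall i, i \in r1 -> m1 i \in L.
  by move=> i ir; rewrite mem_undup mem_cat map_f.
have L2 : forall i, i \in r2 -> m2 i \in L.
  by move=> i ir; rewrite mem_undup mem_cat map_f ?orbT.
rewrite (partition_sum iota x a1 uL L1) (partition_sum iota x a2 uL L2) in E.
case gL: (g \in L); last first.
  rewrite !big1_seq // => i /andP [/eqP eg ir].
    by move: (L2 i ir); rewrite eg gL.
  by move: (L1 i ir); rewrite eg gL.
apply/eqP; rewrite -subr_eq0; apply/eqP.
apply: (Hfree L (fun g => \sum_(i <- r1 | m1 i == g) a1 i - \sum_(j <- r2 | m2 j == g) a2 j) uL) => //.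
under eq_bigr => h _ do rewrite rmorphB mulrBl.
by rewrite sumrB E subrr.
Qed.

Lemma normalize (R A : nzRingType) (iota : {rmorphism R -> A}) n (x : 'I_n -> A)
  (s0 : seq (exps n)) (d : exps n -> R) :
  exists s (d' : exps n -> R), [/\ uniq s, (forall b, b \in s -> d' b != 0) &
   \sum_(b <- s0) iota (d b) * mon x b = \sum_(b <- s) iota (d' b) * mon x b].
Proof.
set c := fun g => \sum_(b <- s0 | b == g) d b.
exists [seq g <- undup s0 | c g != 0], c; split.
- by rewrite filter_uniq // undup_uniq.
- by move=> b; rewrite mem_filter => /andP [].
rewrite (@partition_sum R A iota n x _ s0 d id (undup s0)) ?undup_uniq //; last first.
  by move=> i; rewrite mem_undup.
rewrite big_filter [RHS]big_mkcond; apply: eq_bigr => g _.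
rewrite /c; case: eqP => [->|] /=; first by rewrite rmorph0 mul0r.
by [].
Qed.

Definition encs (B : nat) (l : seq nat) : nat := foldr (fun a acc => a + B * acc)%N 0%N l.
Definition enc (B : nat) n (a : exps n) : nat := encs B [seq a i | i <- index_enum 'I_n].
Arguments enc B {n} a.

Lemma encsD (B : nat) (I : Type) (l : seq I) (f g : I -> nat) :
  encs B [seq (f i + g i)%N | i <- l] = (encs B [seq f i | i <- l] + encs B [seq g i | i <- l])%N.
Proof. by elim: l => //= a l ->; rewrite mulnDr; lia. Qed.

Lemma encD (B : nat) n (a b : exps n) : enc B (addx a b) = (enc B a + enc B b)%N.
Proof.
rewrite /enc -encsD; congr encs; apply: eq_map => i; by rewrite ffunE.
Qed.

Lemma encs_inj (B : nat) (I : eqType) (l : seq I) (f g : I -> nat) :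
  (forall i, i \in l -> f i < B)%N -> (forall i, i \in l -> g i < B)%N ->
  encs B [seq f i | i <- l] = encs B [seq g i | i <- l] -> forall i, i \in l -> f i = g i.
Proof.
elim: l => //= a l IH Hf Hg E i.
have fa := Hf a (mem_head _ _); have ga := Hg a (mem_head _ _).
have E1 : f a = g a.
  have := congr1 (modn^~ B) E => /=.
  by rewrite ![(_ + B * _)%N]addnC ![(B * _)%N]mulnC !modnMDl !modn_small.
have E2 : encs B [seq f i | i <- l] = encs B [seq g i | i <- l].
  have Bp : (0 < B)%N by lia.
  rewrite E1 in E; move/eqP: E; rewrite eqn_add2l eqn_mul2l; case/orP; first by lia.
  by move/eqP.
rewrite in_cons => /orP [/eqP -> //|il].
apply: IH => // j jl; [apply: Hf | apply: Hg]; by rewrite in_cons jl orbT.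
Qed.

Lemma enc_inj (B : nat) n (a b : exps n) :
  (forall i, a i < B)%N -> (forall i, b i < B)%N -> enc B a = enc B b -> a = b.
Proof.
move=> Ha Hb E; apply/ffunP => i.
by apply: (encs_inj (l := index_enum (ordinal n)) _ _ E); rewrite ?mem_index_enum.
Qed.

Lemma enc0 (B : nat) n (a : exps n) : (0 < B)%N -> enc B a = 0%N -> a = zerox n.
Proof.
move=> Bp; rewrite /enc => E; apply/ffunP => i; rewrite ffunE.
have : i \in index_enum 'I_n by rewrite mem_index_enum.
elim: (index_enum 'I_n) E => //= j l IH E.
have [E1 E2] : a j = 0%N /\ encs B [seq a i0 | i0 <- l] = 0%N.
  move/eqP: E; rewrite addn_eq0 muln_eq0 => /andP [/eqP -> /orP [|/eqP ->]] //; lia.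
by rewrite in_cons => /orP [/eqP ->|]; [|apply: IH].
Qed.

Lemma max_in0 (T : eqType) (f : T -> nat) (a : T) (l : seq T) :
  exists2 y, y \in a :: l & forall z, z \in a :: l -> (f z <= f y)%N.
Proof.
elim: l => [|b l [y yl Hy]].
  by exists a; rewrite ?mem_head // => z; rewrite inE => /eqP ->.
case: (leqP (f b) (f y)) => H.
  exists y; first by move: yl; rewrite !inE => /orP [->|->]; rewrite ?orbT.
  move=> z; rewrite !inE => /orP [/eqP ->|/orP [/eqP -> //|zl]].
    by apply: Hy; rewrite mem_head.
  by apply: Hy; rewrite inE zl orbT.
exists b; first by rewrite !inE eqxx orbT.
move=> z; rewrite !inE => /orP [/eqP ->|/orP [/eqP -> //|zl]].
  have := Hy a (mem_head _ _); lia.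
have := Hy z; rewrite inE zl orbT => /(_ isT); lia.
Qed.

Lemma max_in (T : eqType) (l : seq T) (f : T -> nat) (x0 : T) :
  x0 \in l -> exists2 y, y \in l & forall z, z \in l -> (f z <= f y)%N.
Proof. by case: l => // a l _; apply: max_in0. Qed.

Lemma core (R A : nzRingType) (iota : {rmorphism R -> A}) n (x : 'I_n -> A)
  (Hfree : forall (s : seq (exps n)) (c : exps n -> R), uniq s ->
      \sum_(al <- s) iota (c al) * mon x al = 0 ->
      forall al, al \in s -> c al = 0)
  (t : nat) (alpha : 'I_t -> exps n) (s : seq (exps n)) (F : exps n -> 'I_t -> A)
  (e' : 'I_t -> R) (k0 : 'I_t) :
  injective alpha -> uniq s ->
  (forall b, b \in s -> forall k, exists e, e != 0 /\ F b k = iota e * mon x (addx b (alpha k))) ->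
  \sum_(b <- s) \sum_(k < t) F b k = \sum_(k < t) iota (e' k) * mon x (alpha k) ->
  forall b, b \in s -> b = zerox n.
Proof.
move=> ainj us HF Esum b0 b0s.
pose P b k e := (b \in s) ==> ((e != 0) && (F b k == iota e * mon x (addx b (alpha k)))).
have ex : forall b k, exists e, P b k e.
  move=> b k; case: (boolP (b \in s)) => bs; last by exists 0; rewrite /P (negbTE bs).
  by have [e [e0 /eqP Fe]] := HF b bs k; exists e; rewrite /P bs e0 Fe.
pose E b k := xchoose (ex b k).
have HE : forall b, b \in s -> forall k, E b k != 0 /\ F b k = iota (E b k) * mon x (addx b (alpha k)).
  move=> b bs k; have := xchooseP (ex b k); rewrite /P => /implyP /(_ bs) /andP [-> /eqP ->]; done.
set r1 := [seq (b, k) | b <- s, k <- index_enum 'I_t].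
have Esum2 : \sum_(p <- r1) iota (E p.1 p.2) * mon x (addx p.1 (alpha p.2)) =
             \sum_(k <- index_enum 'I_t) iota (e' k) * mon x (alpha k).
  rewrite big_allpairs -Esum; apply: eq_big_seq => b bs; apply: eq_bigr => k _.
  by rewrite (HE b bs k).2.
have Hc := compare_coef Hfree Esum2.
set B := (\sum_(b <- s) \sum_i b i + \sum_k \sum_i alpha k i).+1.
have Bp : (0 < B)%N by [].
have Bs : forall b, b \in s -> forall i, (b i < B)%N.
  move=> b bs i; rewrite /B ltnS.
  apply: (leq_trans _ (leq_addr _ _)).
  rewrite (bigD1_seq b) //=; apply: (leq_trans _ (leq_addr _ _)).
  by rewrite (bigD1 i) //= leq_addr.
have Ba : forall k i, (alpha k i < B)%N.
  move=> k i; rewrite /B ltnS.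
  apply: (leq_trans _ (leq_addl _ _)).
  rewrite (bigD1 k) //=; apply: (leq_trans _ (leq_addr _ _)).
  by rewrite (bigD1 i) //= leq_addr.
have [bs bss Hbs] := max_in (@enc B n) b0s.
have [ks _ Hks] := max_in (fun k => enc B (alpha k)) (mem_index_enum k0).
set g := addx bs (alpha ks).
have H1 := Hc g.
have ur1 : uniq r1.
  by apply: allpairs_uniq => //; [apply: index_enum_uniq | move=> [? ?] [? ?] _ _ /= ->].
have gr1 : (bs, ks) \in r1 by apply: allpairs_f => //; rewrite mem_index_enum.
have Epred : \sum_(p <- r1 | addx p.1 (alpha p.2) == g) E p.1 p.2 =
    \sum_(p <- r1 | p == (bs, ks)) E p.1 p.2.
  rewrite big_seq_cond [RHS]big_seq_cond; apply: eq_bigl => -[b k] /=.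
  case: (boolP (_ \in r1)) => //= /allpairsPdep [b' [k' [b's _ [-> ->]]]] /=.
  apply/idP/idP; last by move/eqP => [-> ->].
  move/eqP => Eg.
  have := congr1 (enc B) Eg; rewrite /g !encD => Eenc.
  have L1 := Hbs b' b's; have L2 := Hks k' (mem_index_enum _).
  have Eb : enc B b' = enc B bs by simpl in *; lia.
  have Ek : enc B (alpha k') = enc B (alpha ks) by simpl in *; lia.
  rewrite (enc_inj (Bs _ b's) (Bs _ bss) Eb) (ainj _ _ (enc_inj (Ba k') (Ba ks) Ek)).
  by [].
rewrite Epred sum_pred1_uniq //= in H1.
case: (boolP (has (fun k => alpha k == g) (index_enum 'I_t))) => [/hasP [k _ /eqP ak]|hn].
  have := congr1 (enc B) ak; rewrite /g encD => Eenc.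
  have L2 := Hks k (mem_index_enum _).
  have Ebs : enc B bs = 0%N by simpl in *; lia.
  apply: (enc0 Bp); have := Hbs b0 b0s; rewrite Ebs; lia.
exfalso; move: (HE bs bss ks).1; rewrite H1 big1_seq ?eqxx //.
move=> k /andP [ak _]; move/hasPn: hn => /(_ k (mem_index_enum _)); by rewrite ak.
Qed.


Definition twists (R A : nzRingType) (iota : {rmorphism R -> A}) (y : A) :=
  forall r, r != 0 -> exists r', r' != 0 /\ y * iota r = iota r' * y.
Definition surjtw (R A : nzRingType) (iota : {rmorphism R -> A}) (y : A) :=
  exists tau : R -> R, (forall r, exists r0, tau r0 = r) /\ forall r, y * iota r = iota (tau r) * y.
Definition sim (R A : nzRingType) (iota : {rmorphism R -> A}) (a b : A) :=
  exists u, u != 0 /\ a = iota u * b.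

Lemma twists1 (R A : nzRingType) (iota : {rmorphism R -> A}) : twists iota 1.
Proof. by move=> r r0; exists r; rewrite mul1r mulr1. Qed.

Lemma twistsM (R A : nzRingType) (iota : {rmorphism R -> A}) (y z : A) :
  twists iota y -> twists iota z -> twists iota (y * z).
Proof.
move=> Hy Hz r r0; have [r1 [r10 E1]] := Hz r r0; have [r2 [r20 E2]] := Hy r1 r10.
by exists r2; split => //; rewrite -mulrA E1 mulrA E2 mulrA.
Qed.

Lemma surjtw1 (R A : nzRingType) (iota : {rmorphism R -> A}) : surjtw iota 1.
Proof. by exists id; split => [r|r]; [exists r|rewrite mul1r mulr1]. Qed.

Lemma surjtwM (R A : nzRingType) (iota : {rmorphism R -> A}) (y z : A) :
  surjtw iota y -> surjtw iota z -> surjtw iota (y * z).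
Proof.
move=> [t1 [s1 E1]] [t2 [s2 E2]]; exists (t1 \o t2); split.
  move=> r; have [r1 <-] := s1 r; have [r2 <-] := s2 r1; by exists r2.
by move=> r; rewrite -mulrA E2 mulrA E1 mulrA.
Qed.

Lemma mon_ind (A : nzRingType) n (x : 'I_n -> A) (P : A -> Prop) :
  P 1 -> (forall a b, P a -> P b -> P (a * b)) -> (forall i, P (x i)) ->
  forall al, P (mon x al).
Proof.
move=> P1 PM Px al; apply: big_ind => // i _.
elim: (al i) => [|k IH]; first by rewrite expr0.
by rewrite exprS; apply: PM.
Qed.

Definition wprod (A : nzRingType) n (x : 'I_n -> A) (w : seq 'I_n) : A := \prod_(k <- w) x k.

Lemma wprod_ind (A : nzRingType) n (x : 'I_n -> A) (P : A -> Prop) :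
  P 1 -> (forall a b, P a -> P b -> P (a * b)) -> (forall i, P (x i)) ->
  forall w, P (wprod x w).
Proof. by move=> P1 PM Px w; apply: big_ind. Qed.

Lemma sim_refl (R A : nzRingType) (iota : {rmorphism R -> A}) a : sim iota a a.
Proof. by exists 1; rewrite oner_neq0 rmorph1 mul1r. Qed.

Lemma sim_trans (R A : nzRingType) (iota : {rmorphism R -> A}) a b c :
  domain R -> sim iota a b -> sim iota b c -> sim iota a c.
Proof.
move=> dom [u [u0 ->]] [v [v0 ->]]; exists (u * v); split; last by rewrite rmorphM mulrA.
by apply/eqP => /dom [] /eqP; apply/negP.
Qed.

Lemma sim_mulr (R A : nzRingType) (iota : {rmorphism R -> A}) a b c :
  sim iota a b -> sim iota (a * c) (b * c).
Proof. by move=> [u [u0 ->]]; exists u; rewrite mulrA. Qed.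

Lemma sim_mull (R A : nzRingType) (iota : {rmorphism R -> A}) y a b :
  twists iota y -> sim iota a b -> sim iota (y * a) (y * b).
Proof.
move=> Hy [u [u0 ->]]; have [u' [u'0 E]] := Hy u u0.
by exists u'; rewrite mulrA E mulrA.
Qed.

Lemma perm_sim (R A : nzRingType) (iota : {rmorphism R -> A}) n (x : 'I_n -> A) :
  domain R ->
  (forall i, twists iota (x i)) ->
  (forall i j, exists c, c != 0 /\ x j * x i = iota c * x i * x j) ->
  forall w w', perm_eq w w' -> sim iota (wprod x w) (wprod x w').
Proof.
move=> dom Htw Hsw.
have twP : forall w, twists iota (wprod x w).
  by apply: wprod_ind; [apply: twists1 | move=> a b; apply: twistsM | ].
have swap : forall i j w, sim iota (wprod x (j :: i :: w)) (wprod x (i :: j :: w)).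
  move=> i j w; have [c [c0 E]] := Hsw i j.
  exists c; split => //; rewrite /wprod !big_cons !mulrA E.
  by rewrite -!mulrA.
have fm : forall a v1 v2, sim iota (wprod x (a :: v1 ++ v2)) (wprod x (v1 ++ a :: v2)).
  move=> a v1 v2; elim: v1 => [|b v1 IH] /=; first by apply: sim_refl.
  apply: sim_trans (swap b a _) _ => //.
  rewrite /wprod big_cons [X in sim _ _ X]big_cons.
  by apply: sim_mull => //; apply: IH.
elim=> [|a w IH] w' pw.
  have -> : w' = [::] by apply/nilP; rewrite /nilp -(perm_size pw).
  by apply: sim_refl.
have aw' : a \in w' by rewrite -(perm_mem pw) mem_head.
case/splitPr: aw' pw => v1 v2 pw.
have pw2 : perm_eq w (v1 ++ v2).
  rewrite -(perm_cons a); apply: (perm_trans pw).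
  by rewrite -cat1s perm_catCA.
apply: (@sim_trans _ _ iota _ (wprod x (a :: v1 ++ v2)) _ dom _ (fm a v1 v2)).
rewrite /wprod big_cons [X in sim _ _ X]big_cons.
by apply: sim_mull => //; apply: IH.
Qed.

Definition wd n (al : exps n) : seq 'I_n := flatten [seq nseq (al i) i | i <- index_enum 'I_n].

Lemma mon_wd (A : nzRingType) n (x : 'I_n -> A) al : mon x al = wprod x (wd al).
Proof.
rewrite /wprod /wd big_flatten big_map; apply: eq_bigr => i _.
elim: (al i) => [|k IH]; first by rewrite big_nil expr0.
by rewrite /= big_cons exprS IH.
Qed.

Lemma count_wd n (al : exps n) (a : pred 'I_n) : count a (wd al) = (\sum_i a i * al i)%N.
Proof.
by rewrite /wd count_flatten sumnE !big_map; apply: eq_bigr => i _; rewrite count_nseq.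
Qed.

Lemma perm_wd n (al be : exps n) : perm_eq (wd al ++ wd be) (wd (addx al be)).
Proof.
apply/permP => a; rewrite count_cat !count_wd -big_split /=; apply: eq_bigr => i _.
by rewrite ffunE mulnDr.
Qed.

Lemma mon_mul (R A : nzRingType) (iota : {rmorphism R -> A}) n (x : 'I_n -> A) :
  domain R ->
  (forall i, twists iota (x i)) ->
  (forall i j, exists c, c != 0 /\ x j * x i = iota c * x i * x j) ->
  forall al be, sim iota (mon x al * mon x be) (mon x (addx al be)).
Proof.
move=> dom Htw Hsw al be; rewrite !mon_wd.
have -> : wprod x (wd al) * wprod x (wd be) = wprod x (wd al ++ wd be) by rewrite /wprod big_cat.
by apply: perm_sim => //; apply: perm_wd.
Qed.


Lemma normal_mul (B : nzRingType) (a b : B) : normal_elt a -> normal_elt b -> normal_elt (a * b).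
Proof.
move=> [Ha1 Ha2] [Hb1 Hb2]; split => c.
  have [c1 E1] := Ha1 c; have [c2 E2] := Hb1 c1.
  by exists c2; rewrite mulrA E1 -mulrA E2 mulrA.
have [c1 E1] := Hb2 c; have [c2 E2] := Ha2 c1.
by exists c2; rewrite -mulrA E1 mulrA E2 mulrA.
Qed.

Lemma normal_1 (B : nzRingType) : normal_elt (1 : B).
Proof. by split => c; exists c; rewrite mul1r mulr1. Qed.

Lemma normal_central (B : nzRingType) (h : B) : central h -> normal_elt h.
Proof. by move=> Hh; split => c; exists c; rewrite Hh. Qed.

Lemma normal_unit (R A : nzRingType) (iota : {rmorphism R -> A}) c :
  is_unit c -> normal_elt (iota c).
Proof.
move=> [d [cd dc]]; split => b.
  exists (iota d * b * iota c); rewrite !mulrA -rmorphM cd rmorph1 mul1r //.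
exists (iota c * b * iota d); rewrite -!mulrA -rmorphM dc rmorph1 mulr1 //.
Qed.

Lemma addxC n (a b : exps n) : addx a b = addx b a.
Proof. by apply/ffunP => i; rewrite !ffunE addnC. Qed.

Lemma mon0 (A : nzRingType) n (x : 'I_n -> A) : mon x (zerox n) = 1.
Proof. by rewrite /mon big1 // => i _; rewrite ffunE expr0. Qed.

Unset Implicit Arguments.

Theorem proposition4p22 (R A : nzRingType) (iota : {rmorphism R -> A})
    (n : nat) (x : 'I_n -> A) :
  domain R -> left_noetherian R ->
  qc_bijective_skewPBW iota x ->
  (* (i) *)
  (forall (c : R) (alpha : exps n) (h : A),
      is_unit c -> normal_elt c -> central h ->
      normal_elt (iota c * mon x alpha * h)) /\
  (* (ii) *)
  (forall (t : nat) (c : 'I_t -> R) (alpha : 'I_t -> exps n),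
      (forall k, c k != 0) -> injective alpha ->
      normal_elt (\sum_(k < t) iota (c k) * mon x (alpha k)) ->
      forall k, normal_elt (c k)).
Proof.
move=> dom _ [Hinj [Hspan Hfree] H3 H4 H5].
have Htw : forall i, twists iota (x i) by move=> i r r0; apply: H3.
have Hsw : forall i j, exists c, c != 0 /\ x j * x i = iota c * x i * x j.
  by move=> i j; have [c [c0 [_ E]]] := H4 i j; exists c.
have Hst : forall i, surjtw iota (x i).
  move=> i; have [sg [[g _ gK] E]] := H5 i; exists sg; split => // r.
  by exists (g r); rewrite gK.
have twM : forall al, twists iota (mon x al).
  by apply: mon_ind; [apply: twists1 | move=> a b; apply: twistsM |].
have stM : forall al, surjtw iota (mon x al).
  by apply: mon_ind; [apply: surjtw1 | move=> a b; apply: surjtwM |].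
have span_ind : forall P : A -> Prop, P 0 -> (forall a b, P a -> P b -> P (a + b)) ->
    (forall a b, P a -> P b -> P (a * b)) -> (forall r, P (iota r)) -> (forall j, P (x j)) ->
    forall a, P a.
  move=> P P0 PD PM Pi Px a; have [s [d ->]] := Hspan a.
  apply: big_ind => // al _; apply: (PM) => //.
  by apply: mon_ind; [move: (Pi 1); rewrite rmorph1 | exact: PM | exact: Px].
split.
  move=> c al h cu _ hc.
  apply: normal_mul; last by apply: normal_central.
  apply: normal_mul; first by apply: normal_unit.
  apply: mon_ind; [apply: normal_1 | move=> a b; apply: normal_mul |].
  move=> i; have [sg [[g gK Kg] E]] := H5 i; split.
    apply: span_ind.
    - by exists 0; rewrite mulr0 mul0r.
    - by move=> a b [a' Ea] [b' Eb]; exists (a' + b'); rewrite mulrDr mulrDl Ea Eb.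
    - by move=> a b [a' Ea] [b' Eb]; exists (a' * b'); rewrite -mulrA Eb mulrA Ea -mulrA.
    - by move=> r; exists (iota (g r)); rewrite E Kg.
    - move=> j; have [c' [_ Ec]] := Hsw i j; have [c0 Ec0] : exists c0, sg c0 = c'.
        by exists (g c'); rewrite Kg.
      by exists (iota c0 * x j); rewrite Ec -Ec0 -E mulrA.
  apply: span_ind.
  - by exists 0; rewrite mulr0 mul0r.
  - by move=> a b [a' Ea] [b' Eb]; exists (a' + b'); rewrite mulrDr mulrDl Ea Eb.
  - by move=> a b [a' Ea] [b' Eb]; exists (a' * b'); rewrite mulrA Ea -mulrA Eb mulrA.
  - by move=> r; exists (iota (sg r)); rewrite E.
  - by move=> j; have [c' [_ Ec]] := Hsw j i; exists (iota c' * x j); rewrite Ec.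
move=> t c alpha c0 ainj [Hn1 Hn2] k.
set f := \sum_(k < t) iota (c k) * mon x (alpha k).
have scalar : forall b : A, (forall s (d' : exps n -> R), uniq s -> (forall be, be \in s -> d' be != 0) ->
    b = \sum_(be <- s) iota (d' be) * mon x be -> forall be, be \in s -> be = zerox n) ->
    exists D, b = iota D.
  move=> b Hb; have [s0 [d Eb]] := Hspan b; have [s [d' [us nz E]]] := normalize iota x s0 d.
  rewrite Eb E in Hb *; exists (\sum_(be <- s) d' be); rewrite rmorph_sum.
  apply: eq_big_seq => be bes; by rewrite (Hb s d' us nz erefl be bes) mon0 mulr1.
have pushV : forall D : R, exists V : 'I_t -> R,
    forall k, mon x (alpha k) * iota D = iota (V k) * mon x (alpha k).
  move=> D.
  have ex : forall k, exists v, mon x (alpha k) * iota D == iota v * mon x (alpha k).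
    by move=> k'; have [tau [_ Et]] := stM (alpha k'); exists (tau D); rewrite Et.
  by exists (fun k => xchoose (ex k)) => k'; apply/eqP; apply: (xchooseP (ex k')).
have coefk : forall a1 a2 : 'I_t -> R,
    \sum_(k < t) iota (a1 k) * mon x (alpha k) = \sum_(k < t) iota (a2 k) * mon x (alpha k) ->
    forall k, a1 k = a2 k.
  move=> a1 a2 E k'; have := compare_coef Hfree E (alpha k').
  have Ep : forall F : 'I_t -> R, \sum_(i <- index_enum 'I_t | alpha i == alpha k') F i = F k'.
    move=> F; rewrite (eq_bigl (fun k => k == k')); last by move=> i; rewrite (inj_eq ainj).
    by rewrite sum_pred1_uniq ?index_enum_uniq ?mem_index_enum.
  by rewrite !Ep.
split => r.
  have [b' Eb'] := Hn1 (iota r).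
  have [D ED] : exists D, b' = iota D.
    apply: scalar => s d' us nz Eb be bes.
    have := @core R A iota n x Hfree t alpha s
      (fun be k' => iota (c k') * mon x (alpha k') * (iota (d' be) * mon x be))
      (fun k' => r * c k') k ainj us.
    move=> /(_ _ _ be bes); apply.
      move=> b1 b1s k'.
      have [d1 [d10 Ed1]] := twM (alpha k') (d' b1) (nz b1 b1s).
      have [u [u0 Eu]] := mon_mul dom Htw Hsw (alpha k') b1.
      exists (c k' * d1 * u); split.
        apply/eqP => /dom [/dom [] |]; [ apply/eqP; apply: c0 | apply/eqP; exact: d10 | apply/eqP; exact: u0].
      rewrite mulrA -(mulrA (iota (c k'))) Ed1 !mulrA -!rmorphM -mulrA Eu mulrA -rmorphM.
      by rewrite addxC.
    rewrite exchange_big /=.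
    transitivity (f * \sum_(be <- s) iota (d' be) * mon x be).
      by rewrite /f mulr_suml; apply: eq_bigr => k' _; rewrite mulr_sumr.
    rewrite -Eb -Eb' /f mulr_sumr; apply: eq_bigr => k' _; by rewrite mulrA rmorphM.
  have [V EV] := pushV D.
  exists (V k); apply: (coefk (fun k => r * c k) (fun k => c k * V k)).
  transitivity (iota r * f).
    by rewrite /f mulr_sumr; apply: eq_bigr => i _; rewrite mulrA rmorphM.
  rewrite Eb' ED /f mulr_suml; apply: eq_bigr => i _; by rewrite -mulrA EV mulrA rmorphM.
have [tau [tsurj Etau]] := stM (alpha k).
have [r0 Er0] := tsurj r.
have [b'' Eb''] := Hn2 (iota r0).
have [V EV] := pushV r0.
have [D ED] : exists D, b'' = iota D.
  apply: scalar => s d' us nz Eb be bes.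
  have := @core R A iota n x Hfree t alpha s
    (fun be k' => iota (d' be) * mon x be * (iota (c k') * mon x (alpha k')))
    (fun k' => c k' * V k') k ainj us.
  move=> /(_ _ _ be bes); apply.
    move=> b1 b1s k'.
    have [c1 [c10 Ec1]] := twM b1 (c k') (c0 k').
    have [u [u0 Eu]] := mon_mul dom Htw Hsw b1 (alpha k').
    exists (d' b1 * c1 * u); split.
      apply/eqP => /dom [/dom [] |]; [ apply/eqP; exact: (nz b1 b1s) | apply/eqP; exact: c10 | apply/eqP; exact: u0].
    by rewrite mulrA -(mulrA (iota (d' b1))) Ec1 !mulrA -!rmorphM -mulrA Eu mulrA -rmorphM.
  transitivity (\sum_(be <- s) iota (d' be) * mon x be * f).
    by apply: eq_bigr => b1 _; rewrite /f mulr_sumr.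
  rewrite -mulr_suml -Eb -Eb'' /f mulr_suml; apply: eq_bigr => k' _.
  by rewrite -mulrA EV mulrA rmorphM.
have Vk : V k = r.
  apply/eqP; rewrite -subr_eq0; apply/eqP.
  apply: (Hfree [:: alpha k] (fun _ => V k - r) erefl _ (alpha k) (mem_head _ _)).
  by rewrite big_seq1 rmorphB mulrBl -EV Etau Er0 subrr.
exists D; rewrite -Vk.
apply: (coefk (fun k => c k * V k) (fun k => D * c k)).
transitivity (f * iota r0).
  by rewrite /f mulr_suml; apply: eq_bigr => i _; rewrite -mulrA EV mulrA rmorphM.
rewrite Eb'' ED /f mulr_sumr; apply: eq_bigr => i _; by rewrite mulrA rmorphM.
Qed.
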